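(* Let $n\geq 2$ and let $R$ be the unital associative ring $\langle x,y \mid x^n=0,\ y^n=0,\ xy+y^{n-1}x^{n-1}=1\rangle$. For any integers $k,l,m\geq 0$ with $m\geq l$, the following hold in $R$: $$x^ky^lx^m = \begin{cases} y^{l-k}x^m & \text{if } l\geq k,\\ x^{k+m-l} & \text{if } l\leq k,\end{cases}\qquad y^mx^ly^k = \begin{cases} y^{m}x^{l-k} & \text{if } l\geq k,\\ y^{k+m-l} & \text{if } l\leq k.\end{cases}$$
   Context: $R$ denotes the quotient of the free unital associative ring $\mathbb{Z}\langle x,y\rangle$ by the two-sided ideal generated by $x^n$, $y^n$ and $xy+y^{n-1}x^{n-1}-1$; $x^0=y^0=1$. *)

(* Defs.v *)
From mathcomp Require Import all_boot all_order all_algebra.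
Set Implicit Arguments. Unset Strict Implicit. Unset Printing Implicit Defensive.
Import GRing.Theory.
Local Open Scope ring_scope.

Definition R_relations (T : pzRingType) (n : nat) (x y : T) : Prop :=
  [/\ x ^+ n = 0, y ^+ n = 0 & x * y + y ^+ n.-1 * x ^+ n.-1 = 1].

(* Main.v *)
Require Import Defs.
From mathcomp Require Import all_boot all_order all_algebra zify.
Import GRing.Theory.
Local Open Scope ring_scope.

Lemma core {T : pzRingType} {n : nat} {x y : T} :
  (2 <= n)%N -> R_relations n x y ->
  forall k l m : nat, (l <= m)%N ->
    ((k <= l)%N -> x ^+ k * y ^+ l * x ^+ m = y ^+ (l - k)%N * x ^+ m) /\
    ((l <= k)%N -> x ^+ k * y ^+ l * x ^+ m = x ^+ (k + m - l)%N).
Proof.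
move=> n2 [hx hy hr].
set N := n.-1 in hr.
have nN : n = N.+1 by rewrite /N; case: n n2 {hx hy hr N}.
rewrite nN in hx hy.
set e := y ^+ N * x ^+ N in hr.
have hex : e * x = 0 by rewrite /e -mulrA -exprSr hx mulr0.
have hye : y * e = 0 by rewrite /e mulrA -exprS hy mul0r.
have hxy : x * y = 1 - e by rewrite -hr addrK.
have hxyx : x * y * x = x by rewrite hxy mulrBl mul1r hex subr0.
have hyxy : y * x * y = y by rewrite -mulrA hxy mulrBr mulr1 hye subr0.
set f := 1 - y * x.
have hxf : x * f = 0 by rewrite /f mulrBr mulr1 mulrA hxyx subrr.
have hyx : y * x = 1 - f by rewrite /f opprB addrC subrK.
clearbody f.
have S : forall t, (t <= N)%N -> forall a, (t < a)%N -> x ^+ a * y ^+ t * f = 0.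
  elim=> [|t IH] tN a ta.
    by case: a ta => // a _; rewrite expr0 mulr1 exprSr -mulrA hxf mulr0.
  case: a ta => // a ta.
  have -> : x ^+ a.+1 * y ^+ t.+1 = x ^+ a * (x * y) * y ^+ t by rewrite exprSr exprS !mulrA.
  rewrite hxy mulrBr mulr1 mulrBl mulrBl (IH (ltnW tN) a ta) sub0r.
  have -> : x ^+ a * e * y ^+ t * f = x ^+ a * y ^+ N * (x ^+ N * y ^+ t * f) by rewrite /e !mulrA.
  by rewrite (IH (ltnW tN) N tN) mulr0 oppr0.
have ef : forall t, (t < N)%N -> e * y ^+ t * f = 0.
  move=> t tN; have -> : e * y ^+ t * f = y ^+ N * (x ^+ N * y ^+ t * f) by rewrite /e !mulrA.
  by rewrite (S t (ltnW tN) N tN) mulr0.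
have L : forall s, e * y ^+ s * x ^+ s.+1 = 0.
  elim=> [|s IH]; first by rewrite expr0 mulr1 expr1.
  case: (ltnP s N) => sN; last first.
    have -> : y ^+ s.+1 = y ^+ (s - N)%N * y ^+ N.+1 by rewrite -exprD; congr (_ ^+ _); lia.
    by rewrite hy !mulr0 !mul0r.
  have -> : e * y ^+ s.+1 * x ^+ s.+2 = e * y ^+ s * (y * x) * x ^+ s.+1.
    by rewrite (exprSr y s) (exprS x s.+1) !mulrA.
  rewrite hyx.
  by rewrite mulrBr mulr1 mulrBl IH ef // mul0r subr0.
have A : forall k l m, (k <= l <= m)%N -> x ^+ k * y ^+ l * x ^+ m = y ^+ (l - k)%N * x ^+ m.
  elim=> [|k IH] l m /andP [kl lm]; first by rewrite expr0 mul1r subn0.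
  case: l kl lm => // l kl lm.
  have -> : x ^+ k.+1 * y ^+ l.+1 * x ^+ m = x ^+ k * ((x * y) * y ^+ l * x ^+ m).
    by rewrite exprSr exprS !mulrA.
  rewrite hxy mulrBl mul1r mulrBl.
  have -> : e * y ^+ l * x ^+ m = 0.
    by rewrite -(subnKC lm) exprD mulrA L mul0r.
  by rewrite subr0 !mulrA IH ?subSS //; apply/andP; split; lia.
move=> k l m lm; split=> kl; first by apply: A; rewrite kl.
rewrite -(subnK kl) exprD -!mulrA (mulrA (x ^+ l)) A ?leqnn // subnn expr0 mul1r.
by rewrite -exprD; congr (_ ^+ _); lia.
Qed.

Lemma expr_conv (T : pzRingType) (z : T) k : (z : T^c) ^+ k = z ^+ k :> T.
Proof.
elim: k => [|k IH]; first by rewrite !expr0.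
by rewrite exprS exprSr -IH.
Qed.

Theorem lemma1 (T : pzRingType) (n : nat) (x y : T) :
  (2 <= n)%N -> R_relations n x y ->
  forall k l m : nat, (l <= m)%N ->
    [/\ ((k <= l)%N -> x ^+ k * y ^+ l * x ^+ m = y ^+ (l - k)%N * x ^+ m),
        ((l <= k)%N -> x ^+ k * y ^+ l * x ^+ m = x ^+ (k + m - l)%N),
        ((k <= l)%N -> y ^+ m * x ^+ l * y ^+ k = y ^+ m * x ^+ (l - k)%N) &
        ((l <= k)%N -> y ^+ m * x ^+ l * y ^+ k = y ^+ (k + m - l)%N)].
Proof.
move=> n2 hR k l m lm.
have [A1 A2] := core n2 hR k l m lm.
have hR' : R_relations n (y : T^c) (x : T^c).
  move: (hR); rewrite /R_relations => -[hx hy hr]; split; rewrite ?expr_conv //.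
have [B1 B2] := core n2 hR' k l m lm.
split=> // kl.
  by rewrite -mulrA; have := B1 kl; rewrite !expr_conv.
by rewrite -mulrA; have := B2 kl; rewrite !expr_conv.
Qed.
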